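(* Let $A \in \mathbb{R}^{m \times n}$, $B \in \mathbb{R}^{n \times m}$, and $p := \min\{m,n\}$. Then there exist matrices $V \in \mathbb{R}^{m \times p}$ and $U \in \mathbb{R}^{n \times p}$ with orthonormal columns (i.e. $V^T V = U^T U = I_p$), and upper Hessenberg matrices $H \in \mathbb{R}^{p \times p}$ and $F \in \mathbb{R}^{p \times p}$ whose subdiagonal entries are all nonnegative, such that \[ V^T A U = H \quad\text{and}\quad U^T B V = F. \]
   Context: A square matrix $H=(h_{i,j})$ is upper Hessenberg if $h_{i,j}=0$ whenever $i > j+1$; its subdiagonal entries are $h_{j+1,j}$. *)

(* Defs.v *)
From HB Require Import structures.
From mathcomp Require Import all_boot all_order all_algebra.
From mathcomp Require Import reals.
Set Implicit Arguments. Unset Strict Implicit. Unset Printing Implicit Defensive.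
Import Order.TTheory GRing.Theory Num.Theory.
Local Open Scope ring_scope.

Definition upper_hessenberg (R : ringType) (p : nat) (H : 'M[R]_p) : Prop :=
  forall i j : 'I_p, (j.+1 < i)%N -> H i j = 0.

Definition nonneg_subdiag (R : numDomainType) (p : nat) (H : 'M[R]_p) : Prop :=
  forall i j : 'I_p, (nat_of_ord i = j.+1)%N -> 0 <= H i j.

(* Main.v *)
Require Import Defs.
From HB Require Import structures.
From mathcomp Require Import all_boot all_order all_algebra.
From mathcomp Require Import reals.
From mathcomp Require Import ring lra.
Import Order.TTheory GRing.Theory Num.Theory.
Local Open Scope ring_scope.

Module Aux.
Set Implicit Arguments. Unset Strict Implicit.
Section S.

Variable R : realType.

Definition firstcol m (v : 'cV[R]_m) : Prop :=
  (forall i : 'I_m, (0 < i)%N -> v i 0 = 0) /\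
  (forall i : 'I_m, (i == 0 :> nat) -> 0 <= v i 0).

Lemma house m (x : 'cV[R]_m) : exists P : 'M[R]_m, P^T *m P = 1%:M /\ firstcol (P^T *m x).
Proof.
case: m x => [|k] x.
  by exists 1%:M; split; [apply/matrixP=> [][]|split=> [][]].
pose t := (x^T *m x) 0 0.
pose nx := Num.sqrt t.
pose e := (delta_mx 0 0 : 'cV[R]_k.+1).
have t0 : 0 <= t.
  rewrite /t mxE; apply: sumr_ge0 => i _; rewrite mxE; exact: mulr_ge0 _ _ || by rewrite -expr2 sqr_ge0.
have nx2 : nx * nx = t by rewrite -expr2 sqr_sqrtr.
have fc_e : firstcol (nx *: e).
  split=> i; rewrite !mxE.
    move=> Hi; rewrite (_ : (i == 0) = false) ?mulr0 //.
    by apply/eqP => h; rewrite h in Hi.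
  move=> /eqP Hi; rewrite (_ : i = 0); last exact: val_inj.
  by rewrite !eqxx mulr1 sqrtr_ge0.
pose w := x - nx *: e.
have [w0|wn0] := eqVneq w 0.
  exists 1%:M; rewrite trmx1 !mul1mx; split => //.
  by move/eqP: w0; rewrite subr_eq0 => /eqP ->.
pose c := x 0 0.
have e00 : forall (A B : 'M[R]_1), (A - B) 0 0 = A 0 0 - B 0 0.
  by move=> *; rewrite !mxE.
have s00 : forall (A : 'M[R]_1) r, (r *: A) 0 0 = r * A 0 0.
  by move=> *; rewrite !mxE.
have ex : (e^T *m x) 0 0 = c.
  by rewrite /e trmx_delta -rowE mxE.
have xe : (x^T *m e) 0 0 = c.
  by rewrite /e -colE !mxE.
have ee : (e^T *m e) 0 0 = 1.
  by rewrite /e trmx_delta mul_delta_mx mxE.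
pose wtx := (w^T *m x) 0 0.
pose s := (w^T *m w) 0 0.
have Ewtx : wtx = t - nx * c.
  rewrite /wtx /w raddfB /= linearZ /= mulmxBl -scalemxAl.
  by rewrite e00 s00 ex.
have Es : s = 2 * wtx.
  have trw : w^T = x^T - nx *: e^T by rewrite /w raddfB /= linearZ.
  rewrite /s trw /w mulmxBl !mulmxBr -!scalemxAl -!scalemxAr.
  rewrite scalerA !e00 !s00 ex xe ee -/t Ewtx -nx2; ring.
have s0 : s != 0.
  move: wn0; apply: contra => /eqP s0; apply/eqP/matrixP => i j.
  rewrite (ord1 j) [in RHS]mxE.
  have : \sum_(l < k.+1) (w l 0) ^+ 2 = s.
    by rewrite /s [RHS]mxE; apply: eq_bigr => l _; rewrite [w^T _ _]mxE expr2.
  rewrite s0 => /eqP.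
  rewrite psumr_eq0; last by move=> l _; exact: sqr_ge0.
  by move/allP => /(_ i (mem_index_enum i)) /=; rewrite sqrf_eq0 => /eqP.
pose a := 2 / s.
pose W := w *m w^T.
pose H := 1%:M - a *: W.
have HT : H^T = H by rewrite /H linearB linearZ /= trmx1 trmx_mul trmxK.
have WW : W *m W = s *: W.
  by rewrite /W mulmxA -(mulmxA w) [w^T *m w]mx11_scalar mul_mx_scalar -scalemxAl.
have HH : H *m H = 1%:M.
  rewrite /H mulmxBl mul1mx mulmxBr mulmx1 -scalemxAl -scalemxAr WW !scalerA.
  have -> : a * a * s = a + a by rewrite /a; field.
  by rewrite scalerDl opprB addrK subrK.
have Hx : H *m x = nx *: e.
  rewrite /H mulmxBl mul1mx -scalemxAl /W -mulmxA [w^T *m x]mx11_scalar.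
  rewrite mul_mx_scalar scalerA -/wtx.
  have wtx0 : wtx != 0 by move: s0; rewrite Es; apply: contra => /eqP ->; rewrite mulr0.
  have -> : a * wtx = 1 by rewrite /a Es; field.
  by rewrite scale1r /w opprB addrC subrK.
by exists H; rewrite HT HH Hx.
Qed.

Definition hessr a b (M : 'M[R]_(a,b)) : Prop :=
  (forall (i : 'I_a) (j : 'I_b), (j.+1 < i)%N -> M i j = 0) /\
  (forall (i : 'I_a) (j : 'I_b), (i : nat) = j.+1 -> 0 <= M i j).

Lemma hess_block a b (M : 'M[R]_(1 + a, 1 + b)) :
  firstcol (dlsubmx M) -> hessr (drsubmx M) -> hessr M.
Proof.
move=> [f1 f2] [h1 h2]; split=> i j.
- case: (splitP i) => i' Ei.
    by rewrite Ei (ord1 i').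
  case: (splitP j) => j' Ej; rewrite Ei Ej.
    rewrite (ord1 j') /= => lt1.
    have -> : i = rshift 1 i' by apply: val_inj.
    have -> : j = lshift b 0 by apply: val_inj; rewrite /= Ej (ord1 j').
    by have := f1 i'; rewrite !mxE => -> //; rewrite -ltnS.
  move=> lt.
  have -> : i = rshift 1 i' by apply: val_inj.
  have -> : j = rshift 1 j' by apply: val_inj.
  by have := h1 i' j'; rewrite !mxE => -> //.
- case: (splitP i) => i' Ei.
    by rewrite Ei (ord1 i').
  case: (splitP j) => j' Ej; rewrite Ei Ej.
    rewrite (ord1 j') /= => e1.
    have -> : i = rshift 1 i' by apply: val_inj.
    have -> : j = lshift b 0 by apply: val_inj; rewrite /= Ej (ord1 j').
    by have := f2 i'; rewrite !mxE; apply; rewrite -(eqn_add2l 1) e1.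
  move=> e1.
  have -> : i = rshift 1 i' by apply: val_inj.
  have -> : j = rshift 1 j' by apply: val_inj.
  by have := h2 i' j'; rewrite !mxE; apply; case: e1.
Qed.

Definition ext a (L : 'M[R]_a) : 'M[R]_(1 + a) := block_mx 1%:M 0 0 L.

Lemma conj_block a b (L : 'M[R]_a) (N : 'M[R]_(1 + a, 1 + b)) (Rm : 'M[R]_b) :
  ext L *m N *m ext Rm =
  block_mx (ulsubmx N) (ursubmx N *m Rm) (L *m dlsubmx N) (L *m drsubmx N *m Rm).
Proof.
rewrite /ext -{1}[N]submxK !mulmx_block.
by rewrite !mul1mx !mulmx1 !mul0mx !mulmx0 !add0r !addr0.
Qed.

Lemma trD a (L : 'M[R]_a) : (ext L)^T = ext L^T.
Proof. by rewrite /ext tr_block_mx trmx1 !trmx0. Qed.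

Lemma orthD a (L : 'M[R]_a) : L^T *m L = 1%:M ->
  (ext L)^T *m ext L = 1%:M.
Proof.
move=> Lo; rewrite trD /ext mulmx_block Lo.
by rewrite !mul1mx !mulmx0 !mul0mx !add0r !addr0 -scalar_mx_block.
Qed.

Lemma firstcolD a (L : 'M[R]_a) (v : 'cV[R]_(1 + a)) :
  firstcol v -> firstcol (ext L *m v).
Proof.
move=> fv; suff -> : ext L *m v = v by [].
rewrite /ext.
have dv : dsubmx v = 0.
  apply/matrixP => i j; rewrite (ord1 j) !mxE.
  by apply: fv.1.
by rewrite -{1}[v]vsubmxK mul_block_col dv !mulmx0 mul1mx mul0mx !addr0 -dv vsubmxK.
Qed.

Ltac vac := first [ let i := fresh "i" in intros i; pose proof (ltn_ord i) as Hi; rewrite ltn0 in Hi; discriminate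
  | let i := fresh "i" in let j := fresh "j" in intros i j; pose proof (ltn_ord j) as Hi; rewrite ltn0 in Hi; discriminate
  | assumption ].

Lemma main m n (A : 'M[R]_(m, n)) (B : 'M[R]_(n, m)) (x : 'cV[R]_m) (y : 'cV[R]_n) :
  exists (P : 'M[R]_m) (Q : 'M[R]_n),
   [/\ P^T *m P = 1%:M, Q^T *m Q = 1%:M, hessr (P^T *m A *m Q),
       hessr (Q^T *m B *m P) & firstcol (P^T *m x) /\ firstcol (Q^T *m y)].
Proof.
elim: m n A B x y => [|m IH] [|n] A B x y.
- exists 1%:M, 1%:M; split; rewrite ?trmx1 ?mul1mx //.
  all: repeat split. all: try vac.
- have [Q [Qo [Qy1 Qy2]]] := house y.
  exists 1%:M, Q; split; rewrite ?trmx1 ?mul1mx //.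
  all: repeat split. all: try vac. all: try (by rewrite mul1mx).
- have [P [Po [Px1 Px2]]] := house x.
  exists P, 1%:M; split; rewrite ?trmx1 ?mul1mx //.
  all: repeat split. all: try vac. all: try (by rewrite mul1mx).
have [P0 [P0o P0x]] := house x.
have [Q0 [Q0o Q0y]] := house y.
pose A0 : 'M[R]_(1 + m, 1 + n) := P0^T *m A *m Q0.
pose B0 : 'M[R]_(1 + n, 1 + m) := Q0^T *m B *m P0.
have [P2 [Q2 [P2o Q2o hA hB [fx fy]]]] :=
  IH n (drsubmx A0) (drsubmx B0) (dlsubmx A0) (dlsubmx B0).
pose D : 'M[R]_(1 + m) := ext P2.
pose E : 'M[R]_(1 + n) := ext Q2.
exists (P0 *m D), (Q0 *m E); split.
- by rewrite trmx_mul mulmxA -(mulmxA D^T) P0o mulmx1 orthD.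
- by rewrite trmx_mul mulmxA -(mulmxA E^T) Q0o mulmx1 orthD.
- have -> : (P0 *m D)^T *m A *m (Q0 *m E) = D^T *m A0 *m E
    by rewrite /A0 trmx_mul !mulmxA.
  apply: hess_block; rewrite /D /E trD conj_block ?block_mxKdl ?block_mxKdr //.
- have -> : (Q0 *m E)^T *m B *m (P0 *m D) = E^T *m B0 *m D
    by rewrite /B0 trmx_mul !mulmxA.
  apply: hess_block; rewrite /D /E trD conj_block ?block_mxKdl ?block_mxKdr //.
split.
- by rewrite trmx_mul -mulmxA /D trD; apply: firstcolD.
- by rewrite trmx_mul -mulmxA /E trD; apply: firstcolD.
Qed.

End S.
End Aux.

Theorem theorem2p1 (R : realType) (m n : nat)
    (A : 'M[R]_(m, n)) (B : 'M[R]_(n, m)) :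
  exists (V : 'M[R]_(m, minn m n)) (U : 'M[R]_(n, minn m n))
         (H F : 'M[R]_(minn m n)),
    [/\ V^T *m V = 1%:M, U^T *m U = 1%:M,
        upper_hessenberg H /\ nonneg_subdiag H,
        upper_hessenberg F /\ nonneg_subdiag F &
        V^T *m A *m U = H /\ U^T *m B *m V = F].
Proof.
have [P [Q [Po Qo [hA1 hA2] [hB1 hB2] _]]] := Aux.main A B 0 0.
pose wm := widen_ord (geq_minl m n).
pose wn := widen_ord (geq_minr m n).
pose V := colsub wm P.
pose U := colsub wn Q.
have key : forall a b k l (X : 'M[R]_(a, k)) (M : 'M[R]_(a, b)) (Y : 'M[R]_(b, l))
    (f : 'I_(minn m n) -> 'I_k) (g : 'I_(minn m n) -> 'I_l),
  (colsub f X)^T *m M *m colsub g Y = mxsub f g (X^T *m M *m Y).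
  by move=> a b k l X M Y f g; rewrite trmx_mxsub mul_rowsub_mx -mxsub_mul.
exists V, U, (mxsub wm wn (P^T *m A *m Q)), (mxsub wn wm (Q^T *m B *m P)).
rewrite /V /U !key; split.
- rewrite trmx_mxsub mul_rowsub_mx mulmx_colsub Po; apply/matrixP => i j.
  by rewrite !mxE -!val_eqE.
- rewrite trmx_mxsub mul_rowsub_mx mulmx_colsub Qo; apply/matrixP => i j.
  by rewrite !mxE -!val_eqE.
- by split=> i j h; rewrite mxE; [apply: hA1 | apply: hA2].
- by split=> i j h; rewrite mxE; [apply: hB1 | apply: hB2].
- by [].
Qed.
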